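(* Let $M\subset\mathbb{R}^{2d}$ satisfy the standing assumptions below, let $V$ be the vector field defined below and $\varphi_t$ its flow. There exist constants $\tilde C,\tilde\delta>0$ such that for all $x$ with $|x|\ge 1/\tilde\delta$, $$|\varphi_1(x)-x-V(x)|\le\frac{\tilde C}{|x|}.$$
   Context: $\mathbb{R}^{2d}$ carries its standard inner product, norm $|\cdot|$, complex structure $J$ ($J^2=-I$, orthogonal) and symplectic form $\omega(u,v)=\langle Ju,v\rangle$. Standing assumptions: $M$ is a smooth closed hypersurface bounding a strictly convex domain containing the origin in its interior, and is a level set of a smooth function with positive definite Hessian. Let $G:M\to S^{2d-1}$ be the outward unit normal Gauss map (a diffeomorphism). For $x\neq0$ set $n_\pm(x)=G^{-1}(\mp Jx/|x|)$ and $V(x)=2(n_+(x)-n_-(x))$, a smooth vector field on $\mathbb{R}^{2d}\setminus\{0\}$, homogeneous of degree zero ($V(cx)=V(x)$ for $c>0$). It equals $-2X_H$, where $X_H=J\nabla H$ and $H$ is the positively $1$-homogeneous function whose unit level set is the symplectic polar of the symmetrization of $M$; in particular its flow $\varphi_t$ is defined for all $t$. *)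

(* Defs.v *)
From HB Require Import structures.
From mathcomp Require Import all_boot all_order all_algebra.
From mathcomp Require Import all_classical all_reals all_analysis.
Set Implicit Arguments. Unset Strict Implicit. Unset Printing Implicit Defensive.
Import Order.TTheory GRing.Theory Num.Theory.
Import numFieldNormedType.Exports.
Local Open Scope classical_set_scope.
Local Open Scope ring_scope.

Section Defs.
Variables (R : realType) (d : nat).

(* R^{2d} as row vectors; coordinates (x_1..x_d, y_1..y_d). *)
Notation V := 'rV[R]_(d + d).

Definition edot (u v : V) : R := \sum_i u 0 i * v 0 i.
Definition enorm (v : V) : R := Num.sqrt (edot v v).

(* standard complex structure: J(x, y) = (-y, x), i.e. multiplication by i on C^d *)
Definition Jstd (v : V) : V := row_mx (- rsubmx v) (lsubmx v).

Definition ebasis (i : 'I_(d + d)) : V := delta_mx 0 i.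

(* C^infty: every iterated directional derivative exists and is
   (Frechet) differentiable everywhere *)
Fixpoint iter_dir (f : V -> R) (vs : seq V) : V -> R :=
  match vs with
  | [::] => f
  | v :: vs' => fun x => 'D_v (iter_dir f vs') x
  end.
Definition smooth (f : V -> R) : Prop :=
  forall (vs : seq V) (x : V), differentiable (iter_dir f vs) x.

Definition grad (f : V -> R) (x : V) : V := \row_i 'D_(ebasis i) f x.
Definition hessian (f : V -> R) (x : V) : 'M[R]_(d + d) :=
  \matrix_(i, j) 'D_(ebasis i) ('D_(ebasis j) f) x.
Definition posdef (A : 'M[R]_(d + d)) : Prop :=
  forall v : V, v != 0 -> 0 < (v *m A *m v^T) 0 0.

Definition levelset (F : V -> R) (c : R) : set V := [set x | F x = c].

Definition gauss (F : V -> R) (x : V) : V := (enorm (grad F x))^-1 *: grad F x.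

Definition gauss_inv (F : V -> R) (c : R) (u : V) : V :=
  xget 0 [set p | F p = c /\ gauss F p = u].

Definition nplus F c (x : V) : V := gauss_inv F c (- ((enorm x)^-1 *: Jstd x)).
Definition nminus F c (x : V) : V := gauss_inv F c ((enorm x)^-1 *: Jstd x).
Definition Vfield F c (x : V) : V := 2%:R *: (nplus F c x - nminus F c x).

Definition is_flow (Vf : V -> V) (phi : R -> V -> V) : Prop :=
  forall x : V, x != 0 ->
    phi 0 x = x /\
    forall t : R, phi t x != 0 /\ is_derive t 1 (fun s => phi s x) (Vf (phi t x)).

End Defs.

(* Main.v *)
Require Import Defs.
From HB Require Import structures.
From mathcomp Require Import all_boot all_order all_algebra.
From mathcomp Require Import all_classical all_reals all_analysis.
From mathcomp Require Import ring lra.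
Import Order.TTheory GRing.Theory Num.Theory.
Import numFieldNormedType.Exports.
Local Open Scope classical_set_scope.
Local Open Scope ring_scope.
Set Implicit Arguments. Unset Strict Implicit. Unset Printing Implicit Defensive.
Section Eucl.
Variables (R : realType) (d : nat).
Notation V := 'rV[R]_(d + d).
Implicit Types u v w : V.

Lemma edotC u v : edot u v = edot v u.
Proof. by apply: eq_bigr => i _; rewrite mulrC. Qed.

Lemma edotDr u v w : edot u (v + w) = edot u v + edot u w.
Proof. by rewrite /edot -big_split; apply: eq_bigr => i _; rewrite mxE mulrDr. Qed.

Lemma edotZr u v a : edot u (a *: v) = a * edot u v.
Proof. by rewrite /edot mulr_sumr; apply: eq_bigr => i _; rewrite mxE mulrCA. Qed.

Lemma edotNr u v : edot u (- v) = - edot u v.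
Proof. by rewrite -scaleN1r edotZr mulN1r. Qed.

Lemma edotBr u v w : edot u (v - w) = edot u v - edot u w.
Proof. by rewrite edotDr edotNr. Qed.

Lemma edotDl u v w : edot (v + w) u = edot v u + edot w u.
Proof. by rewrite edotC edotDr !(edotC u). Qed.

Lemma edotZl u v a : edot (a *: v) u = a * edot v u.
Proof. by rewrite edotC edotZr edotC. Qed.

Lemma edotNl u v : edot (- v) u = - edot v u.
Proof. by rewrite edotC edotNr edotC. Qed.

Lemma edotBl u v w : edot (v - w) u = edot v u - edot w u.
Proof. by rewrite edotDl edotNl. Qed.

Lemma edot0r u : edot u 0 = 0.
Proof. by rewrite /edot big1 // => i _; rewrite mxE mulr0. Qed.

Lemma edot0l u : edot 0 u = 0.
Proof. by rewrite edotC edot0r. Qed.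

Lemma edot_ge0 v : 0 <= edot v v.
Proof. by apply: sumr_ge0 => i _; rewrite -expr2 sqr_ge0. Qed.

Lemma edot_eq0 v : edot v v = 0 -> v = 0.
Proof.
move=> h; apply/rowP => i; rewrite mxE.
have h' : \sum_(j < d + d) v 0 j ^+ 2 = 0.
  by rewrite -[RHS]h /edot; apply: eq_bigr => j _; rewrite expr2.
have := @psumr_eq0P R _ xpredT (fun j => v 0 j ^+ 2) (fun j _ => sqr_ge0 _) h' i isT.
by move/eqP; rewrite sqrf_eq0 => /eqP.
Qed.

Lemma enorm_ge0 v : 0 <= enorm v.
Proof. exact: sqrtr_ge0. Qed.

Lemma enorm2 v : enorm v ^+ 2 = edot v v.
Proof. by rewrite sqr_sqrtr // edot_ge0. Qed.

Lemma enorm_eq0 v : (enorm v == 0) = (v == 0).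
Proof.
apply/eqP/eqP => [h|->]; last by rewrite /enorm edot0r sqrtr0.
by apply: edot_eq0; rewrite -enorm2 h expr0n.
Qed.

Lemma enorm_gt0 v : v != 0 -> 0 < enorm v.
Proof. by move=> h; rewrite lt_def enorm_ge0 enorm_eq0 h. Qed.

Lemma enormZ a v : enorm (a *: v) = `|a| * enorm v.
Proof.
by rewrite /enorm edotZr edotZl mulrA -expr2 sqrtrM ?sqr_ge0 // sqrtr_sqr.
Qed.

Lemma enormN v : enorm (- v) = enorm v.
Proof. by rewrite -scaleN1r enormZ normrN1 mul1r. Qed.

Lemma enormB u v : enorm (u - v) = enorm (v - u).
Proof. by rewrite -enormN opprB. Qed.

Lemma edot_CS u v : edot u v <= enorm u * enorm v.
Proof.
have [->|u0] := eqVneq u 0; first by rewrite edot0l /enorm edot0l sqrtr0 mul0r.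
have [->|v0] := eqVneq v 0; first by rewrite edot0r /enorm edot0r sqrtr0 mulr0.
set a := enorm u; set b := enorm v.
have a0 : 0 < a by exact: enorm_gt0.
have b0 : 0 < b by exact: enorm_gt0.
have := edot_ge0 (b *: u - a *: v).
rewrite edotBl !edotBr !edotZl !edotZr -!enorm2 -/a -/b (edotC v u).
move=> h.
have h2 : 0 <= 2 * (a * b) * (a * b - edot u v) by lra.
rewrite -subr_ge0; move: h2; rewrite pmulr_rge0 // mulr_gt0 //.
by rewrite mulr_gt0.
Qed.

Lemma edot_CSabs u v : `|edot u v| <= enorm u * enorm v.
Proof.
rewrite ler_norml edot_CS andbT -lerNl -edotNl -(enormN u).
exact: edot_CS.
Qed.

Lemma enormD u v : enorm (u + v) <= enorm u + enorm v.
Proof.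
rewrite -(@ler_sqr _ _ _) ?nnegrE ?addr_ge0 ?enorm_ge0 //.
rewrite enorm2 edotDl !edotDr sqrrD !enorm2 (edotC v u).
have := edot_CS u v; lra.
Qed.

Lemma enormBtri u v w : enorm (u - w) <= enorm (u - v) + enorm (v - w).
Proof. by rewrite (_ : u - w = (u - v) + (v - w)) ?enormD // addrA subrK. Qed.

Lemma enorm_rev u v : enorm u - enorm v <= enorm (u - v).
Proof.
have := enormD (u - v) v; rewrite subrK; lra.
Qed.

Lemma coord_le_enorm v i : `|v 0 i| <= enorm v.
Proof.
rewrite -sqrtr_sqr ler_sqrt ?edot_ge0 // /edot (bigD1 i) //= -expr2 lerDl.
by apply: sumr_ge0 => j _; rewrite -expr2 sqr_ge0.
Qed.

End Eucl.

Lemma diff_sumf (R : realType) (U W : normedModType R) n (f : 'I_n -> U -> W) x :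
  (forall i, differentiable (f i) x) -> differentiable (fun y => \sum_(i < n) f i y) x.
Proof. by move=> h; rewrite -fct_sumE; exact: differentiable_sum. Qed.

Lemma diff_mulf (R : realType) (U : normedModType R) (f g : U -> R) x :
  differentiable f x -> differentiable g x -> differentiable (fun y => f y * g y) x.
Proof. by move=> hf hg; exact: differentiableM. Qed.

Lemma diff_scalef (R : realType) (U : normedModType R) (f : U -> R) (k : R) x :
  differentiable f x -> differentiable (fun y => k * f y) x.
Proof. by move=> hf; apply: diff_mulf => //; exact: differentiable_cst. Qed.

Section Eucl2.
Variables (R : realType) (d : nat).
Notation V := 'rV[R]_(d + d).
Implicit Types u v w : V.

Lemma JstdD u v : Jstd (u + v) = Jstd u + Jstd v.
Proof. rewrite /Jstd add_row_mx; congr row_mx; rewrite ?raddfD //= ?opprD //. Qed.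

Lemma JstdZ a v : Jstd (a *: v) = a *: Jstd v.
Proof. rewrite /Jstd scale_row_mx; congr row_mx; rewrite ?linearZ //= ?scalerN //. Qed.

Lemma JstdN v : Jstd (- v) = - Jstd v.
Proof. by rewrite -scaleN1r JstdZ scaleN1r. Qed.

Lemma JstdB u v : Jstd (u - v) = Jstd u - Jstd v.
Proof. by rewrite JstdD JstdN. Qed.

Lemma edot_split u v : edot u v =
  \sum_(i < d) u 0 (lshift d i) * v 0 (lshift d i) +
  \sum_(i < d) u 0 (rshift d i) * v 0 (rshift d i).
Proof. by rewrite /edot big_split_ord. Qed.

Lemma edotJ u v : edot (Jstd u) (Jstd v) = edot u v.
Proof.
rewrite !edot_split /Jstd addrC; congr (_ + _); apply: eq_bigr => i _;
by rewrite ?row_mxEl ?row_mxEr !mxE ?mulrNN.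
Qed.

Lemma edotJself u : edot u (Jstd u) = 0.
Proof.
rewrite edot_split /Jstd -big_split big1 // => i _.
rewrite row_mxEl row_mxEr !mxE mulrN /= [u 0 (rshift d i) * _]mulrC; exact: addNr.
Qed.

Lemma enormJ u : enorm (Jstd u) = enorm u.
Proof. by rewrite /enorm edotJ. Qed.

Lemma edot_differentiable w x : differentiable (fun v : V => edot w v) x.
Proof.
rewrite /edot; apply: diff_sumf => i.
exact/diff_scalef/differentiable_coord.
Qed.

Lemma edot_continuous w : continuous (fun v : V => edot w v).
Proof. by move=> x; apply: differentiable_continuous; exact: edot_differentiable. Qed.

Lemma enorm_continuous : continuous (@enorm R d).
Proof.
move=> x; apply: (continuous_comp (f := fun v : V => edot v v)); last exact: sqrt_continuous.
apply: differentiable_continuous; rewrite /edot; apply: diff_sumf => i.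
by apply: diff_mulf; exact: differentiable_coord.
Qed.

End Eucl2.

Section Line.
Variables (R : realType) (d : nat).
Notation V := 'rV[R]_(d + d).

Lemma line_derive (f : V -> R) (q w : V) (s : R) :
  differentiable f (q + s *: w) ->
  is_derive s 1 (fun t => f (q + t *: w)) ('D_w f (q + s *: w)).
Proof.
move=> df.
set g := fun t => f (q + t *: w).
have E : (fun h : R => h^-1 *: ((g \o shift s) (h *: 1) - g s)) =
         (fun h : R => h^-1 *: ((f \o shift (q + s *: w)) (h *: w) - f (q + s *: w))).
  apply/funext => h; rewrite /g /= /shift.
  by rewrite [h *: 1]mulr1 scalerDl addrCA addrC.
have dg : derivable g s 1 by rewrite /derivable E; exact: diff_derivable.
by apply: DeriveDef => //; rewrite /derive E.
Qed.

End Line.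

Section Calc.
Variables (R : realType) (d : nat) (F : 'rV[R]_(d + d) -> R).
Hypothesis F_smooth : smooth F.
Notation V := 'rV[R]_(d + d).

Lemma Fdiff x : differentiable F x.
Proof. exact: (F_smooth [::] x). Qed.

Lemma Djdiff j x : differentiable ('D_(ebasis R j) F) x.
Proof. exact: (F_smooth [:: ebasis R j] x). Qed.

Lemma Hdiff i j x : differentiable ('D_(ebasis R i) ('D_(ebasis R j) F)) x.
Proof. exact: (F_smooth [:: ebasis R i; ebasis R j] x). Qed.

Lemma expand (f : V -> R) x w : differentiable f x ->
  'D_w f x = \sum_i w 0 i * 'D_(ebasis R i) f x.
Proof.
move=> df; rewrite deriveE // {1}(row_sum_delta w) linear_sum.
by apply: eq_bigr => i _; rewrite linearZ /= -deriveE.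
Qed.

Lemma DF_grad x w : 'D_w F x = edot (grad F x) w.
Proof.
rewrite expand; last exact: Fdiff.
rewrite /edot; apply: eq_big => // i _; by rewrite mxE mulrC.
Qed.

Lemma DwF_fun w : 'D_w F = fun y => \sum_j w 0 j * 'D_(ebasis R j) F y.
Proof. by apply/funext => y; rewrite expand //; exact: Fdiff. Qed.

Lemma DwF_diff w x : differentiable ('D_w F) x.
Proof.
rewrite DwF_fun; apply: diff_sumf => j; apply: diff_scalef; exact: Djdiff.
Qed.

Definition Qf (x w : V) : R := (w *m hessian F x *m w^T) 0 0.

Lemma Qf_expand x w : Qf x w =
  \sum_j w 0 j * \sum_i w 0 i * 'D_(ebasis R i) ('D_(ebasis R j) F) x.
Proof.
rewrite /Qf !mxE; apply: eq_bigr => j _; rewrite !mxE mulrC; congr (_ * _).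
by apply: eq_bigr => i _; rewrite !mxE.
Qed.

Lemma DD x w : 'D_w ('D_w F) x = Qf x w.
Proof.
rewrite Qf_expand DwF_fun.
have -> : (fun y => \sum_j w 0 j * 'D_(ebasis R j) F y) =
          \sum_(j < d + d) (fun y => w 0 j *: 'D_(ebasis R j) F y).
  by rewrite fct_sumE.
rewrite derive_sum; last first.
  move=> j; apply: diff_derivable; apply: diff_scalef; exact: Djdiff.
apply: eq_bigr => j _.
have -> : (fun y => w 0 j *: 'D_(ebasis R j) F y) = w 0 j *: 'D_(ebasis R j) F.
  by [].
rewrite deriveZ; last exact/diff_derivable/Djdiff.
by rewrite expand; last exact: Djdiff.
Qed.

End Calc.

Section MVTaux.
Variable R : realType.

Lemma deriv_cont (f df : R -> R) :
  (forall x : R, is_derive x 1 f (df x)) -> continuous f.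
Proof.
move=> h x; apply: differentiable_continuous; apply/derivable1_diffP.
by have [] := h x.
Qed.

Lemma mvt_all (f df : R -> R) a b : a <= b ->
  (forall x : R, is_derive x 1 f (df x)) ->
  exists2 c, c \in `[a, b] & f b - f a = df c * (b - a).
Proof.
move=> ab h; apply: (MVT_segment ab (fun x _ => h x)).
exact/continuous_subspaceT/(deriv_cont h).
Qed.

End MVTaux.

Section Convex.
Variables (R : realType) (d : nat) (F : 'rV[R]_(d + d) -> R).
Hypothesis F_smooth : smooth F.
Hypothesis F_hess : forall x, posdef (hessian F x).
Notation V := 'rV[R]_(d + d).

Lemma Qf_gt0 x v : v != 0 -> 0 < Qf F x v.
Proof. exact: F_hess. Qed.

Lemma Qf_ge0 x v : 0 <= Qf F x v.
Proof.
have [->|v0] := eqVneq v 0; last exact/ltW/Qf_gt0.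
by rewrite /Qf mul0mx mul0mx mxE.
Qed.

Lemma h_der (p v : V) (t : R) : is_derive t 1 (fun s => F (p + s *: v)) ('D_v F (p + t *: v)).
Proof. by apply: line_derive; exact: Fdiff. Qed.

Lemma h1_der (p v : V) (t : R) : is_derive t 1 (fun s => 'D_v F (p + s *: v)) (Qf F (p + t *: v) v).
Proof.
have H := @line_derive R d ('D_v F) p v t (DwF_diff F_smooth v _).
by apply: (is_derive_eq H); exact: DD.
Qed.

Lemma h1_lin (p v : V) (mu a b : R) : a <= b ->
  (forall t, a <= t <= b -> mu <= Qf F (p + t *: v) v) ->
  'D_v F (p + a *: v) + mu * (b - a) <= 'D_v F (p + b *: v).
Proof.
move=> ab hmu.
have [c cab E] := mvt_all ab (h1_der p v).
have hc : mu <= Qf F (p + c *: v) v.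
  by apply: hmu; move: cab; rewrite in_itv /= => /andP[-> ->].
have : mu * (b - a) <= Qf F (p + c *: v) v * (b - a).
  by apply: ler_wpM2r => //; rewrite subr_ge0.
move: E; set A := 'D_v F (p + a *: v); set B := 'D_v F (p + b *: v).
move=> E; lra.
Qed.

Lemma h1_mono (p v : V) (a b : R) : a <= b -> 'D_v F (p + a *: v) <= 'D_v F (p + b *: v).
Proof.
move=> ab; have := @h1_lin p v 0 a b ab (fun t _ => Qf_ge0 _ _).
by rewrite mul0r addr0.
Qed.

Lemma taylor (p v : V) (mu : R) : 0 <= mu ->
  (forall t, 0 <= t <= 1 -> mu <= Qf F (p + t *: v) v) ->
  F p + 'D_v F p + mu / 4 <= F (p + v).
Proof.
move=> mu0 hmu.
set h := fun s => F (p + s *: v).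
set h1 := fun s => 'D_v F (p + s *: v).
have h0 : h 0 = F p by rewrite /h scale0r addr0.
have hh1 : h 1 = F (p + v) by rewrite /h scale1r.
have h10 : h1 0 = 'D_v F p by rewrite /h1 scale0r addr0.
have half0 : (0 : R) <= 1 / 2 by lra.
have half1 : (1 / 2 : R) <= 1 by lra.
have [c1 c1i E1] := mvt_all half0 (h_der p v).
have [c2 c2i E2] := mvt_all half1 (h_der p v).
move: c1i c2i; rewrite !in_itv /= => /andP[c10 c11] /andP[c20 c21].
have m1 : h1 0 <= h1 c1 by exact: h1_mono.
have m2 : h1 0 + mu * (c2 - 0) <= h1 c2.
  apply: h1_lin; first lra.
  move=> t /andP[t0 t1]; apply: hmu; rewrite t0 /=; lra.
rewrite -h0 -hh1 -h10.
have e1 : h (1 / 2) - h 0 = h1 c1 * (1 / 2 - 0) by exact: E1.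
have e2 : h 1 - h (1 / 2) = h1 c2 * (1 - 1 / 2) by exact: E2.
have : mu * (1 / 2) <= mu * c2 by apply: ler_wpM2l; lra.
move: e1 e2 m1 m2; rewrite !subr0.
set A := h (1/2); set B := h 0; set C := h 1; set D := h1 c1; set G := h1 c2; set H := h1 0.
move=> e1 e2 m1 m2 m3.
have e2' : C - A = G / 2 by rewrite e2; field.
have e1' : A - B = D / 2 by rewrite e1; field.
lra.
Qed.

End Convex.

Section Unbounded.
Variables (R : realType) (d : nat) (F : 'rV[R]_(d + d) -> R).
Hypothesis F_smooth : smooth F.
Hypothesis F_hess : forall x, posdef (hessian F x).
Notation V := 'rV[R]_(d + d).

Lemma DFN (x z : V) : 'D_(- z) F x = - 'D_z F x.
Proof. by rewrite !DF_grad // edotNr. Qed.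

Lemma unbA (c : R) (q z : V) (s1 : R) : F q < c -> 0 <= s1 ->
  0 < 'D_z F (q + s1 *: z) -> exists s : R, F (q + s *: z) = c.
Proof.
move=> Fq s10 al0.
set al := 'D_z F (q + s1 *: z).
set F1 := F (q + s1 *: z).
set s := s1 + `|c - F1| / al.
have ss1 : s1 <= s by rewrite /s lerDl divr_ge0 // ltW.
have [xi xii E] := mvt_all ss1 (h_der F_smooth q z).
move: xii; rewrite in_itv /= => /andP[xi1 xi2].
have m : al <= 'D_z F (q + xi *: z) by exact: h1_mono.
have hs : c <= F (q + s *: z).
  have e : s - s1 = `|c - F1| / al by rewrite /s addrC addKr.
  have h3 : al * (s - s1) <= 'D_z F (q + xi *: z) * (s - s1).
    by apply: ler_wpM2r => //; rewrite subr_ge0.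
  have e2 : al * (s - s1) = `|c - F1| by rewrite e mulrCA divff ?mulr1 ?gt_eqF.
  have h2 : c - F1 <= `|c - F1| by exact: ler_norm.
  move: E h3 e2 h2; rewrite -/F1.
  set A := 'D_z F (q + xi *: z) * _; set B := al * _; set Fs := F (q + s *: z).
  move=> E h3 e2 h2; lra.
have s0 : 0 <= s by exact: le_trans ss1.
have cont : {within `[0, s], continuous (fun s => F (q + s *: z))}.
  exact/continuous_subspaceT/(deriv_cont (h_der F_smooth q z)).
have mm : Num.min (F (q + 0 *: z)) (F (q + s *: z)) <= c <=
          Num.max (F (q + 0 *: z)) (F (q + s *: z)).
  rewrite scale0r addr0; apply/andP; split.
    by rewrite ge_min (ltW Fq).
  by rewrite le_max hs orbT.
have [y _ hy] := IVT s0 cont mm.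
by exists y.
Qed.

Lemma unbounded (c : R) (q z : V) : F q < c -> z != 0 ->
  exists s : R, F (q + s *: z) = c.
Proof.
move=> Fq z0.
have ler01 : (0 : R) <= 1 by [].
have [xi _ E] := mvt_all ler01 (h1_der F_smooth q z).
have Q0 := Qf_gt0 F_hess (q + xi *: z) z0.
case: (ltrP 0 ('D_z F (q + 1 *: z))) => h1.
  exact: unbA h1.
have : 0 < 'D_(- z) F (q + 0 *: - z).
  rewrite DFN scale0r; move: E; rewrite subr0 mulr1 scale0r => E.
  rewrite oppr_gt0; lra.
move/(unbA Fq (lexx 0)) => [s hs]; exists (- s).
by rewrite scaleNr -scalerN.
Qed.

Lemma tangent (p q : V) : F p + 'D_(q - p) F p <= F q.
Proof.
have := taylor F_smooth F_hess (lexx 0) (fun t _ => Qf_ge0 F_hess _ _) (p := p) (v := q - p).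
by rewrite mul0r addr0 [p + (q - p)]addrC subrK.
Qed.

Lemma grad_p (c : R) (p : V) : F p = c ->
  c - F 0 <= edot (grad F p) p.
Proof.
move=> Fp; have := tangent p 0; rewrite sub0r DF_grad // edotNr Fp; lra.
Qed.

End Unbounded.

Lemma near0_neg (R : realType) (f : R -> R) : {for 0, continuous f} -> f 0 < 0 ->
  exists2 del : R, 0 < del & forall t, `|t| < del -> f t < 0.
Proof.
move=> cf f0.
have e0 : 0 < - f 0 / 2 by rewrite divr_gt0 // oppr_gt0.
have [del /= del0 H] := (nbhs_ballP _ _).1 (cvgr_dist_lt _ _ cf _ e0).
exists del => // t tdel.
have : ball (0 : R) del t by rewrite -ball_normE /ball_ /= sub0r normrN.
move/H => /=; rewrite ltr_norml => /andP[h1 h2].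
lra.
Qed.

Section Gauss.
Variables (R : realType) (d : nat) (F : 'rV[R]_(d + d) -> R) (c : R).
Hypothesis F_smooth : smooth F.
Hypothesis F_hess : forall x, posdef (hessian F x).
Hypothesis M_compact : compact (levelset F c).
Hypothesis origin_inside : F 0 < c.
Notation V := 'rV[R]_(d + d).

Lemma edot_self1 (u : V) : enorm u = 1 -> edot u u = 1.
Proof. by move=> u1; rewrite -enorm2 u1 expr1n. Qed.

Lemma gauss_exists (u : V) : enorm u = 1 -> exists p, F p = c /\ gauss F p = u.
Proof.
move=> u1.
have uu := edot_self1 u1.
have Ju0 : Jstd u != 0 by rewrite -enorm_eq0 enormJ u1 oner_eq0.
have uJu := edotJself u.
have [s0 hs0] := unbounded F_smooth F_hess origin_inside Ju0.
have Mne : levelset F c !=set0 by exists (0 + s0 *: Jstd u).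
have cont : {within levelset F c, continuous (fun v : V => edot u v)}.
  exact/continuous_subspaceT/edot_continuous.
have [p pM pmax] := EVT_max_rV Mne M_compact cont.
have Fp : F p = c by move: pM; rewrite inE.
have pmax' : forall t, F t = c -> edot u t <= edot u p.
  by move=> t ht; apply: pmax; rewrite inE.
set g := grad F p.
have gp : c - F 0 <= edot g p := grad_p F_smooth F_hess Fp.
have up0 : 0 <= edot u p.
  by have := pmax' _ hs0; rewrite add0r edotZr uJu mulr0.
have CS : edot g u ^+ 2 <= edot g g.
  have := edot_CSabs g u; rewrite u1 mulr1 => /ler_normlP [h1 h2].
  have e0 := enorm_ge0 g.
  have h3 : 0 <= (enorm g - edot g u) * (enorm g + edot g u) by apply: mulr_ge0; lra.
  rewrite -enorm2; nra.
set a := edot g u; set G2 := edot g g.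
have eq : G2 = a ^+ 2.
  apply/eqP; rewrite eq_le CS andbT leNgt; apply/negP => lt.
  have G2pos : 0 < G2 by have := sqr_ge0 a; lra.
  set D := G2 - a ^+ 2.
  have D0 : 0 < D by rewrite /D subr_gt0.
  have na0 : 0 < 2 * (`|a| + 1) by have := normr_ge0 a; lra.
  set eps := D / (2 * (`|a| + 1)).
  have eps0 : 0 < eps by exact: divr_gt0.
  have epsE : eps * (2 * (`|a| + 1)) = D by rewrite /eps divfK ?gt_eqF.
  have aeps : a * eps <= `|a| * eps by apply: ler_wpM2r; [exact: ltW|exact: ler_norm].
  set s := (a + eps) / G2.
  have sG : s * G2 = a + eps by rewrite /s divfK ?gt_eqF.
  set w := u - s *: g.
  have gw : edot g w = - eps.
    by rewrite /w edotBr edotZr -/G2 -/a sG; lra.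
  have uw : 0 < edot u w.
    rewrite /w edotBr edotZr uu edotC -/a.
    have : s * a * G2 < G2.
      have DE : D = G2 - a ^+ 2 by [].
      rewrite mulrAC sG; move: epsE aeps D0; rewrite DE; nra.
    rewrite subr_gt0 => h; rewrite -(ltr_pM2r G2pos) mul1r; exact: h.
  have Dw0 : 'D_w F p < 0 by rewrite DF_grad // gw oppr_lt0.
  have cont0 : {for (0:R), continuous (fun t : R => 'D_w F (p + t *: w))}.
    exact: (deriv_cont (h1_der F_smooth p w)).
  have h10 : 'D_w F (p + 0 *: w) < 0 by rewrite scale0r addr0.
  have [del del0 Hdel] := near0_neg cont0 h10.
  set t0 := del / 2.
  have t00 : 0 <= t0 by rewrite /t0; lra.
  have [xi xii E] := mvt_all t00 (h_der F_smooth p w).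
  move: xii; rewrite in_itv /= => /andP[xi0 xi1].
  have hxi : 'D_w F (p + xi *: w) < 0.
    by apply: Hdel; rewrite ger0_norm //; rewrite /t0 in xi1; lra.
  have Fq : F (p + t0 *: w) < c.
    move: E; rewrite scale0r addr0 Fp subr0 => E.
    have : 'D_w F (p + xi *: w) * t0 < 0.
      by rewrite pmulr_llt0 // /t0; lra.
    lra.
  have [s' hs'] := unbounded F_smooth F_hess Fq Ju0.
  have := pmax' _ hs'.
  rewrite !edotDr !edotZr uJu mulr0 addr0.
  have : 0 < t0 * edot u w by rewrite mulr_gt0 // /t0; lra.
  lra.
have ga : g = a *: u.
  apply/eqP; rewrite -subr_eq0; apply/eqP/edot_eq0.
  rewrite !edotBl !edotBr !edotZl !edotZr uu (edotC u g) -/a -/G2 eq; ring.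
have a0 : 0 < a.
  have : 0 < edot g p.
    by apply: lt_le_trans gp; rewrite subr_gt0.
  rewrite ga edotZl; nra.
have ga' : grad F p = a *: u := ga.
exists p; split => //.
by rewrite /gauss ga' enormZ u1 mulr1 gtr0_norm // scalerA mulVf ?gt_eqF // scale1r.
Qed.

End Gauss.

Section QfHom.
Variables (R : realType) (d : nat) (F : 'rV[R]_(d + d) -> R).
Notation V := 'rV[R]_(d + d).

Lemma QfZ (x v : V) k : Qf F x (k *: v) = k ^+ 2 * Qf F x v.
Proof.
rewrite !Qf_expand mulr_sumr; apply: eq_big => // j _; rewrite mxE.
have -> : \sum_i (k *: v) 0 i * 'D_(ebasis R i) ('D_(ebasis R j) F) x =
          k * \sum_i v 0 i * 'D_(ebasis R i) ('D_(ebasis R j) F) x.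
  by rewrite mulr_sumr; apply: eq_big => // i _; rewrite mxE mulrA.
by rewrite expr2; ring.
Qed.

End QfHom.

Section Bounds.
Variables (R : realType) (d : nat) (F : 'rV[R]_(d + d) -> R) (c : R).
Hypothesis F_smooth : smooth F.
Hypothesis F_hess : forall x, posdef (hessian F x).
Hypothesis M_compact : compact (levelset F c).
Hypothesis origin_inside : F 0 < c.
Notation V := 'rV[R]_(d + d).

Lemma rho_bound : exists rho : R, 0 < rho /\ forall p, F p = c -> enorm p <= rho.
Proof.
case: (pselect (levelset F c !=set0)) => [Mne|M0]; last first.
  by exists 1; split => // p Fp; exfalso; apply: M0; exists p.
have cont : {within levelset F c, continuous (@enorm R d)}.
  exact/continuous_subspaceT/enorm_continuous.
have [p0 _ H] := EVT_max_rV Mne M_compact cont.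
exists (enorm p0 + 1); split; first by have := enorm_ge0 p0; lra.
by move=> p Fp; have := H p (_ : _); rewrite inE => /(_ Fp); lra.
Qed.

Lemma gradnorm_cont : continuous (fun x : V => enorm (grad F x)).
Proof.
have -> : (fun x : V => enorm (grad F x)) =
  (fun x => Num.sqrt (\sum_i 'D_(ebasis R i) F x * 'D_(ebasis R i) F x)).
  apply/funext => x; rewrite /enorm /edot; congr Num.sqrt.
  by apply: eq_big => // i _; rewrite mxE.
move=> x; apply: (continuous_comp (f := fun x => \sum_i 'D_(ebasis R i) F x * 'D_(ebasis R i) F x)); last exact: sqrt_continuous.
apply: differentiable_continuous; apply: diff_sumf => i.
by apply: diff_mulf; exact: Djdiff.
Qed.

Lemma L_bound : exists L : R, 0 < L /\ forall p, F p = c -> enorm (grad F p) <= L.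
Proof.
case: (pselect (levelset F c !=set0)) => [Mne|M0]; last first.
  by exists 1; split => // p Fp; exfalso; apply: M0; exists p.
have cont : {within levelset F c, continuous (fun x : V => enorm (grad F x))}.
  exact/continuous_subspaceT/gradnorm_cont.
have [p0 _ H] := EVT_max_rV Mne M_compact cont.
exists (enorm (grad F p0) + 1); split; first by have := enorm_ge0 (grad F p0); lra.
by move=> p Fp; have := H p (_ : _); rewrite inE => /(_ Fp); lra.
Qed.

End Bounds.

Section MBound.
Variables (R : realType) (d : nat) (F : 'rV[R]_(d + d) -> R).
Hypothesis F_smooth : smooth F.
Hypothesis F_hess : forall x, posdef (hessian F x).
Notation V := 'rV[R]_(d + d).
Notation W := 'rV[R]_((d + d) + (d + d)).

Definition Phi (z : W) : R := Qf F (lsubmx z) (rsubmx z).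

Lemma Phi_cont : continuous Phi.
Proof.
have -> : Phi = fun z => \sum_j (rsubmx z) 0 j *
    \sum_i (rsubmx z) 0 i * 'D_(ebasis R i) ('D_(ebasis R j) F) (lsubmx z).
  by apply/funext => z; rewrite /Phi Qf_expand.
move=> z; apply: differentiable_continuous; apply: diff_sumf => j.
have dr : forall k, differentiable (fun z : W => (rsubmx z) 0 k) z.
  move=> k; apply: (differentiable_comp (f := rsubmx) (g := fun v : V => v 0 k)).
    exact: differentiable_rsubmx.
  exact: differentiable_coord.
apply: diff_mulf => //; apply: diff_sumf => i; apply: diff_mulf => //.
apply: (differentiable_comp (f := lsubmx) (g := 'D_(ebasis R i) ('D_(ebasis R j) F))).
  exact: differentiable_lsubmx.
exact: Hdiff.
Qed.

Lemma edotW (z : W) : edot z z = edot (lsubmx z) (lsubmx z) + edot (rsubmx z) (rsubmx z).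
Proof. by rewrite edot_split; congr (_ + _); apply: eq_big => // i _; rewrite !mxE. Qed.

Lemma m_bound (rho : R) : 0 <= rho -> exists m : R, 0 < m /\
  forall x v : V, enorm x <= rho -> enorm v = 1 -> m <= Qf F x v.
Proof.
move=> rho0.
set K := (fun z : W => enorm (lsubmx z)) @^-1` [set r | r <= rho] `&`
         (fun z : W => enorm (rsubmx z)) @^-1` [set r | r = 1].
have cl : continuous (fun z : W => enorm (lsubmx z)).
  move=> z; apply: continuous_comp; last exact: enorm_continuous.
  exact/differentiable_continuous/differentiable_lsubmx.
have cr : continuous (fun z : W => enorm (rsubmx z)).
  move=> z; apply: continuous_comp; last exact: enorm_continuous.
  exact/differentiable_continuous/differentiable_rsubmx.
have Kcl : closed K.
  apply: closedI.
    exact: (proj1 (continuous_closedP _) cl _ (@closed_le _ rho)).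
  exact: (proj1 (continuous_closedP _) cr _ (@closed_eq _ 1)).
have Kb : bounded_set K.
  exists (rho + 1); split; first by rewrite realE; apply/orP; left; lra.
  move=> M hM z [/= hz1 hz2].
  have ez : enorm z <= rho + 1.
    rewrite -(@ler_sqr _ (enorm z)) ?nnegrE ?enorm_ge0 //; last by lra.
    rewrite enorm2 edotW -!enorm2 hz2.
    have := enorm_ge0 (lsubmx z).
    have : enorm (lsubmx z) ^+ 2 <= rho ^+ 2.
      by rewrite (@ler_sqr _ _ _) ?nnegrE ?enorm_ge0.
    nra.
  rewrite /Num.norm /= mx_normrE; apply: bigmax_le => [|[i j] _ /=]; first lra.
  rewrite (ord1 i); have := coord_le_enorm z j; lra.
have Kc : compact K := bounded_closed_compact Kb Kcl.
case: (pselect (K !=set0)) => [Kne|K0]; last first.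
  exists 1; split => // x v hx hv; exfalso; apply: K0; exists (row_mx x v).
  by split; rewrite /= ?row_mxKl ?row_mxKr.
have contK : {within K, continuous Phi} by exact/continuous_subspaceT/Phi_cont.
have [z0 z0K H] := EVT_min_rV Kne Kc contK.
move: (z0K); rewrite inE => -[/= h1 h2].
exists (Phi z0); split.
  apply: Qf_gt0 => //; rewrite -enorm_eq0 h2 oner_eq0 //.
move=> x v hx hv.
have := H (row_mx x v) (_ : _); rewrite /Phi row_mxKl row_mxKr; apply.
by rewrite inE; split; rewrite /= ?row_mxKl ?row_mxKr.
Qed.

End MBound.

Section Lip.
Variables (R : realType) (d : nat) (F : 'rV[R]_(d + d) -> R) (c : R).
Hypothesis F_smooth : smooth F.
Hypothesis F_hess : forall x, posdef (hessian F x).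
Hypothesis M_compact : compact (levelset F c).
Hypothesis origin_inside : F 0 < c.
Notation V := 'rV[R]_(d + d).

Lemma grad_pos (p : V) : F p = c -> 0 < enorm (grad F p).
Proof.
move=> Fp; apply: enorm_gt0; apply/eqP => g0.
have := grad_p F_smooth F_hess Fp; rewrite g0 edot0l.
by have := origin_inside; lra.
Qed.

Lemma gauss_lip : exists kappa : R, 0 < kappa /\ forall p q : V, F p = c -> F q = c ->
  kappa * enorm (p - q) <= enorm (gauss F p - gauss F q).
Proof.
have [rho [rho0 Hrho]] := rho_bound M_compact.
have [L [L0 HL]] := L_bound F_smooth M_compact.
have [m [m0 Hm]] := m_bound F_smooth F_hess (ltW rho0).
have Qgen : forall a b : V, F a = c -> F b = c -> forall t : R, 0 <= t <= 1 ->
    m * enorm (b - a) ^+ 2 <= Qf F (a + t *: (b - a)) (b - a).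
  move=> a b Fa Fb t /andP[t0 t1].
  set v := b - a.
  have hx : enorm (a + t *: v) <= rho.
    have -> : a + t *: v = (1 - t) *: a + t *: b.
      by apply/rowP => i; rewrite /v !mxE; ring.
    apply: le_trans (enormD _ _) _; rewrite !enormZ !ger0_norm ?subr_ge0 //.
    have := Hrho a Fa; have := Hrho b Fb.
    have := enorm_ge0 a; have := enorm_ge0 b; nra.
  have [->|v0] := eqVneq v 0.
    by rewrite /enorm edot0r sqrtr0 expr0n /= mulr0 (Qf_ge0 F_hess).
  set k := enorm v.
  have k0 : 0 < k by exact: enorm_gt0.
  have e : Qf F (a + t *: v) v = k ^+ 2 * Qf F (a + t *: v) (k^-1 *: v).
    by rewrite -QfZ scalerA divff ?gt_eqF ?scale1r.
  have u1 : enorm (k^-1 *: v) = 1.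
    by rewrite enormZ ger0_norm ?invr_ge0 ?ltW // mulVf ?gt_eqF.
  have := Hm _ _ hx u1; rewrite e => h.
  by rewrite mulrC; apply: ler_wpM2l => //; exact: sqr_ge0.
have Dgen : forall a b : V, F a = c -> F b = c ->
    edot (grad F a) (b - a) <= - (m * enorm (b - a) ^+ 2) / 4.
  move=> a b Fa Fb.
  have mu0 : 0 <= m * enorm (b - a) ^+ 2 by apply: mulr_ge0; [exact: ltW|exact: sqr_ge0].
  have := taylor F_smooth F_hess mu0 (Qgen a b Fa Fb).
  rewrite DF_grad // [a + (b - a)]addrC subrK Fa Fb; lra.
exists (m / (2 * L)); split; first by rewrite divr_gt0 // mulr_gt0.
move=> p q Fp Fq.
set e := enorm (p - q).
have e0 : 0 <= e by exact: enorm_ge0.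
have [e00|epos] := eqVneq e 0.
  by rewrite e00 mulr0 enorm_ge0.
have epos' : 0 < e by rewrite lt_def epos e0.
set mu := m * e ^+ 2.
have mu0 : 0 <= mu by apply: mulr_ge0; [exact: ltW|exact: sqr_ge0].
have D1 := Dgen p q Fp Fq; rewrite enormB -/e -/mu in D1.
have D2 := Dgen q p Fq Fp; rewrite -/e -/mu in D2.
set A := enorm (grad F p); set B := enorm (grad F q).
have A0 : 0 < A := grad_pos Fp.
have B0 : 0 < B := grad_pos Fq.
have iA : L^-1 <= A^-1 by rewrite lef_pV2 ?posrE // HL.
have iB : L^-1 <= B^-1 by rewrite lef_pV2 ?posrE // HL.
have iL0 : 0 < L^-1 by rewrite invr_gt0.
set X := edot (grad F p) (q - p) in D1.
set Y := edot (grad F q) (p - q) in D2.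
have S : edot (gauss F p - gauss F q) (p - q) = A^-1 * (- X) + B^-1 * (- Y).
  rewrite /gauss edotBl !edotZl -/A -/B /X /Y -edotNr opprB.
  by rewrite -[X in _ - B^-1 * X]opprK -edotNr opprB mulrN opprK.
have S1 : L^-1 * (mu / 4) <= A^-1 * (- X).
  apply: ler_pM => //; [exact: ltW|by apply: divr_ge0|lra].
have S2 : L^-1 * (mu / 4) <= B^-1 * (- Y).
  apply: ler_pM => //; [exact: ltW|by apply: divr_ge0|lra].
have CS := edot_CS (gauss F p - gauss F q) (p - q).
rewrite -/e S in CS.
set N := enorm (gauss F p - gauss F q) in CS *.
have key : L^-1 * (mu / 2) <= N * e by lra.
have kE : m / (2 * L) * e = (L^-1 * (mu / 2)) / e.
  by rewrite /mu; field; rewrite ?gt_eqF.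
rewrite kE ler_pdivrMr //.
Qed.

End Lip.

Section Unit.
Variables (R : realType) (d : nat).
Notation V := 'rV[R]_(d + d).

Lemma unit_diff (x y : V) : x != 0 -> y != 0 ->
  enorm ((enorm x)^-1 *: x - (enorm y)^-1 *: y) <= 2 * enorm (x - y) / enorm x.
Proof.
move=> x0 y0.
set a := enorm x; set b := enorm y; set e := enorm (x - y).
have a0 : 0 < a by exact: enorm_gt0.
have b0 : 0 < b by exact: enorm_gt0.
have -> : a^-1 *: x - b^-1 *: y = a^-1 *: (x - y) + (a^-1 - b^-1) *: y.
  by apply/rowP => i; rewrite !mxE; ring.
have ia : `|a^-1| = a^-1 by rewrite ger0_norm // invr_ge0 ltW.
apply: le_trans (enormD _ _) _; rewrite !enormZ -/b -/e ia.
have r1 : a - b <= e by exact: enorm_rev.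
have r2 : b - a <= e by rewrite /e enormB; exact: enorm_rev.
have t : `|a^-1 - b^-1| * b = `|b - a| / a.
  have e1 : (a^-1 - b^-1) * b = (b - a) / a by field; rewrite ?gt_eqF.
  have : `|(a^-1 - b^-1) * b| = `|(b - a) / a| by rewrite e1.
  by rewrite normrM (gtr0_norm b0) normrM normfV (gtr0_norm a0).
have t2 : `|b - a| <= e by rewrite ler_norml; apply/andP; split; lra.
rewrite t; have : `|b - a| / a <= e / a by rewrite ler_pM2r ?invr_gt0.
have -> : 2 * e / a = e / a + e / a by field; rewrite gt_eqF.
have : a^-1 * e = e / a by rewrite mulrC.
lra.
Qed.

Lemma unitJ_diff (x y : V) : x != 0 -> y != 0 ->
  enorm ((enorm x)^-1 *: Jstd x - (enorm y)^-1 *: Jstd y) <= 2 * enorm (x - y) / enorm x.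
Proof.
move=> x0 y0; rewrite -!JstdZ -JstdB enormJ; exact: unit_diff.
Qed.

Lemma unitJ_norm (x : V) : x != 0 -> enorm ((enorm x)^-1 *: Jstd x) = 1.
Proof.
move=> x0; rewrite enormZ enormJ ger0_norm ?invr_ge0 ?enorm_ge0 // mulVf //.
by rewrite gt_eqF // enorm_gt0.
Qed.

End Unit.

Section Proj.
Variables (R : realType) (d : nat).
Notation V := 'rV[R]_(d + d).

Lemma proj_deriv (g : R -> V) (D w : V) (t : R) :
  is_derive t 1 g D -> is_derive t 1 (fun s => edot w (g s)) (edot w D).
Proof.
move=> [dg gD].
have cj : forall j, is_derive t 1 (fun s => g s 0 j) (D 0 j).
  move=> j; have dj := (derivable_mxP g t 1).1 dg 0 j.
  apply: DeriveDef => //.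
  have := derive_mx dg; rewrite gD => ->; by rewrite mxE.
have -> : (fun s => edot w (g s)) = \sum_(j < d + d) (fun s => w 0 j *: g s 0 j).
  by rewrite fct_sumE.
have dj : forall j, derivable (fun s => w 0 j *: g s 0 j) t 1.
  by move=> j; apply: derivableZ; case: (cj j).
apply: DeriveDef; first exact: derivable_sum.
rewrite derive_sum //; rewrite /edot; apply: eq_big => // j _.
have -> : (fun s => w 0 j *: g s 0 j) = w 0 j *: (fun s => g s 0 j) by [].
rewrite deriveZ; last by case: (cj j).
by case: (cj j) => _ ->.
Qed.

End Proj.

Section VF.
Variables (R : realType) (d : nat) (F : 'rV[R]_(d + d) -> R) (c : R).
Hypothesis F_smooth : smooth F.
Hypothesis F_hess : forall x, posdef (hessian F x).
Hypothesis M_compact : compact (levelset F c).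
Hypothesis origin_inside : F 0 < c.
Notation V := 'rV[R]_(d + d).

Lemma ginv_spec (u : V) : enorm u = 1 ->
  F (gauss_inv F c u) = c /\ gauss F (gauss_inv F c u) = u.
Proof.
move=> u1; have ex := gauss_exists F_smooth F_hess M_compact origin_inside u1.
exact: (xgetPex 0 ex).
Qed.

Lemma V_bound (rho : R) : (forall p, F p = c -> enorm p <= rho) ->
  forall x : V, x != 0 -> enorm (Vfield F c x) <= 4 * rho.
Proof.
move=> Hrho x x0.
have u1 := unitJ_norm x0.
have u1' : enorm (- ((enorm x)^-1 *: Jstd x)) = 1 by rewrite enormN.
have [h1 _] := ginv_spec u1.
have [h2 _] := ginv_spec u1'.
rewrite /Vfield enormZ /nplus /nminus ger0_norm ?ler0n //.
have := enormD (gauss_inv F c (- ((enorm x)^-1 *: Jstd x))) (- gauss_inv F c ((enorm x)^-1 *: Jstd x)).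
rewrite enormN.
have := Hrho _ h1; have := Hrho _ h2.
have := enorm_ge0 (gauss_inv F c (- ((enorm x)^-1 *: Jstd x)) - gauss_inv F c ((enorm x)^-1 *: Jstd x)).
lra.
Qed.

Lemma V_lip (kappa : R) : 0 < kappa ->
  (forall p q : V, F p = c -> F q = c ->
     kappa * enorm (p - q) <= enorm (gauss F p - gauss F q)) ->
  forall x y : V, x != 0 -> y != 0 ->
  enorm (Vfield F c y - Vfield F c x) <= 8 / kappa * enorm (x - y) / enorm x.
Proof.
move=> k0 Hk x y x0 y0.
set ux := (enorm x)^-1 *: Jstd x; set uy := (enorm y)^-1 *: Jstd y.
have ux1 : enorm ux = 1 := unitJ_norm x0.
have uy1 : enorm uy = 1 := unitJ_norm y0.
have ux1' : enorm (- ux) = 1 by rewrite enormN.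
have uy1' : enorm (- uy) = 1 by rewrite enormN.
have [Fpx Gpx] := ginv_spec ux1'.
have [Fpy Gpy] := ginv_spec uy1'.
have [Fmx Gmx] := ginv_spec ux1.
have [Fmy Gmy] := ginv_spec uy1.
have dxy := unitJ_diff x0 y0; rewrite -/ux -/uy in dxy.
set e := enorm (x - y) in dxy *.
set A := enorm (nplus F c y - nplus F c x).
set B := enorm (nminus F c y - nminus F c x).
have hA : kappa * A <= 2 * e / enorm x.
  have := Hk _ _ Fpy Fpx; rewrite Gpy Gpx opprK [X in _ <= enorm X]addrC => h.
  exact: le_trans h dxy.
have hB : kappa * B <= 2 * e / enorm x.
  have := Hk _ _ Fmy Fmx; rewrite Gmy Gmx -/B => h.
  by apply: le_trans h _; rewrite enormB.
have -> : Vfield F c y - Vfield F c x =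
    2%:R *: ((nplus F c y - nplus F c x) - (nminus F c y - nminus F c x)).
  by apply/rowP => i; rewrite /Vfield !mxE; ring.
rewrite enormZ ger0_norm ?ler0n //.
have := enormD (nplus F c y - nplus F c x) (- (nminus F c y - nminus F c x)).
rewrite enormN -/A -/B => hs.
have -> : 8 / kappa * e / enorm x = (8 * e / enorm x) / kappa by ring.
rewrite ler_pdivlMr //.
have : 2%:R * enorm (nplus F c y - nplus F c x - (nminus F c y - nminus F c x)) <= 2 * (A + B).
  by rewrite ler_pM2l ?ltr0n.
have -> : 8 * e / enorm x = 4 * (2 * e / enorm x) by ring.
set E := 2 * e / enorm x in hA hB *.
nra.
Qed.

End VF.

Unset Implicit Arguments.

Theorem lemma3p3 (R : realType) (d : nat) (hd : (0 < d)%N)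
  (F : 'rV[R]_(d + d) -> R) (c : R)
  (F_smooth : smooth F)
  (F_hess : forall x, posdef (hessian F x))
  (M_compact : compact (levelset F c))
  (origin_inside : F 0 < c)
  (phi : R -> 'rV[R]_(d + d) -> 'rV[R]_(d + d))
  (phi_flow : is_flow (Vfield F c) phi) :
  exists Ct : R, exists deltat : R, 0 < Ct /\ 0 < deltat /\
    forall x : 'rV[R]_(d + d), deltat^-1 <= enorm x ->
      enorm (phi 1 x - x - Vfield F c x) <= Ct / enorm x.
Proof.
have [rho [rho0 Hrho]] := rho_bound M_compact.
have [kappa [k0 Hk]] := gauss_lip F_smooth F_hess M_compact origin_inside.
have Vb := V_bound F_smooth F_hess M_compact origin_inside Hrho.
have Vl := V_lip F_smooth F_hess M_compact origin_inside k0 Hk.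
exists (32 * rho / kappa), 1; split; first by rewrite divr_gt0 // mulr_gt0.
split; first exact: ltr01.
move=> x; rewrite invr1 => hx.
have xpos : 0 < enorm x by lra.
have x0 : x != 0 by apply/eqP => x0; move: xpos; rewrite x0 /enorm edot0r sqrtr0 ltxx.
have [phi0 Hphi] := phi_flow x x0.
have der : forall (w : 'rV[R]_(d + d)) (t : R),
    is_derive t 1 (fun s => edot w (phi s x)) (edot w (Vfield F c (phi t x))).
  by move=> w t; apply: proj_deriv; exact: (proj2 (Hphi t)).
have step1 : forall s : R, 0 <= s <= 1 -> enorm (phi s x - x) <= 4 * rho.
  move=> s /andP[s0 s1].
  set w := phi s x - x.
  have [xi xii E] := mvt_all s0 (der w).
  rewrite phi0 -edotBr -/w subr0 in E.
  have hV := Vb _ (proj1 (Hphi xi)).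
  have cs := edot_CS w (Vfield F c (phi xi x)).
  have ew := enorm_ge0 w.
  have h1 : edot w (Vfield F c (phi xi x)) <= enorm w * (4 * rho).
    by apply: le_trans cs _; apply: ler_wpM2l.
  have h2 : edot w w <= enorm w * (4 * rho).
    rewrite E; have : edot w (Vfield F c (phi xi x)) * s <= edot w (Vfield F c (phi xi x)) * 1 \/
                      edot w (Vfield F c (phi xi x)) < 0.
      case: (lerP 0 (edot w (Vfield F c (phi xi x)))) => h; last by right.
      by left; apply: ler_wpM2l.
    case=> h.
      by apply: le_trans h _; rewrite mulr1.
    have : edot w (Vfield F c (phi xi x)) * s <= 0 by apply: mulr_le0_ge0 => //; exact: ltW.
    have : 0 <= enorm w * (4 * rho) by apply: mulr_ge0 => //; lra.
    lra.
  rewrite -enorm2 in h2.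
  have r0 : 0 <= 4 * rho by lra.
  nra.
set w := phi 1 x - x - Vfield F c x.
have ler01 : (0 : R) <= 1 by [].
have [xi xii E] := mvt_all ler01 (der w).
rewrite phi0 -edotBr subr0 mulr1 in E.
have xi01 : 0 <= xi <= 1 by move: xii; rewrite in_itv.
have hy := step1 xi xi01.
have yx0 := proj1 (Hphi xi).
have L := Vl x (phi xi x) x0 yx0.
have ww : edot w w = edot w (Vfield F c (phi xi x) - Vfield F c x).
  by rewrite /w edotBr E edotBr.
have cs := edot_CS w (Vfield F c (phi xi x) - Vfield F c x).
have ew := enorm_ge0 w.
have L2 : enorm (Vfield F c (phi xi x) - Vfield F c x) <= 32 * rho / kappa / enorm x.
  apply: le_trans L _.
  rewrite enormB.
  have -> : 32 * rho / kappa / enorm x = 8 / kappa * (4 * rho) / enorm x by ring.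
  by rewrite ler_pM2r ?invr_gt0 // ler_pM2l ?divr_gt0.
have h2 : enorm w ^+ 2 <= enorm w * (32 * rho / kappa / enorm x).
  rewrite enorm2 ww; apply: le_trans cs _; exact: (ler_wpM2l ew L2).
have K0 : 0 <= 32 * rho / kappa / enorm x.
  by apply: divr_ge0; [apply: divr_ge0; [lra|exact: ltW]|exact: ltW].
set K := 32 * rho / kappa / enorm x in h2 K0 *.
nra.
Qed.
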